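(* Let $B \subset \mathbb{R}^3$ be an open ball and let $\hat{P} \in \mathbb{R}^3 \setminus B$. Then: (i) if $\hat{P}' \in C^+(B,\hat{P})$, then $\mathrm{cl}(C^+(B,\hat{P}')) \subset C^+(B,\hat{P})$; (ii) if $\hat{P}' \in C^+(B,\hat{P})$ and $\eta \in \mathbb{R}^3$ satisfies $\hat{P}' + \eta \in C^+(B,\hat{P}')$, then $\hat{P} + \eta \in C^+(B,\hat{P})$; (iii) if $\hat{P}' \in C^+_0(B,\hat{P})$, then $C^+(B,\hat{P}') \subset C^+(B,\hat{P})$.
   Context: For a bounded convex set $B \subset \mathbb{R}^3$ and a point $Q \in \mathbb{R}^3$ with $Q \notin B$, the positive half-cone $C^+(B,Q)$ is the set of points $Y \in \mathbb{R}^3$ for which there exist $x' \in B$ and $\alpha > 0$ such that $Y - Q = \alpha (Q - x')$, and $C^+_0(B,Q) := C^+(B,Q) \cup \{Q\}$. Here $\mathrm{cl}(S)$ denotes the topological closure of $S$. *)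

(* Defs.v *)
From HB Require Import structures.
From mathcomp Require Import all_boot all_order all_algebra.
From mathcomp Require Import all_classical all_reals all_analysis.
Set Implicit Arguments. Unset Strict Implicit. Unset Printing Implicit Defensive.
Import Order.TTheory GRing.Theory Num.Theory.
Import numFieldNormedType.Exports.
Local Open Scope classical_set_scope.
Local Open Scope ring_scope.

Definition eucl_ball (R : realType) (c : 'rV[R]_3) (r : R) : set 'rV[R]_3 :=
  [set x | \sum_(i < 3) (x ord0 i - c ord0 i) ^+ 2 < r ^+ 2].

Definition half_cone (R : realType) (B : set 'rV[R]_3) (Q : 'rV[R]_3) : set 'rV[R]_3 :=
  [set Y | exists x', B x' /\ exists alpha : R, 0 < alpha /\ Y - Q = alpha *: (Q - x')].

Definition half_cone0 (R : realType) (B : set 'rV[R]_3) (Q : 'rV[R]_3) : set 'rV[R]_3 :=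
  half_cone B Q `|` [set Q].

(* Main.v *)
Require Import Defs.
From HB Require Import structures.
From mathcomp Require Import all_boot all_order all_algebra.
From mathcomp Require Import all_classical all_reals all_analysis.
From mathcomp Require Import ring lra.
Import Order.TTheory GRing.Theory Num.Theory.
Import numFieldNormedType.Exports.
Local Open Scope classical_set_scope.
Local Open Scope ring_scope.

Section En.
Context {R : realType}.
Implicit Types u v : 'rV[R]_3.

Definition sq3 v := \sum_(i < 3) v ord0 i ^+ 2.
Definition en v := Num.sqrt (sq3 v).

Lemma sq3E v : sq3 v = v ord0 ord0 ^+ 2 + v ord0 (lift ord0 ord0) ^+ 2
   + v ord0 (lift ord0 (lift ord0 ord0)) ^+ 2.
Proof. by rewrite /sq3 !big_ord_recl big_ord0 addr0 addrA. Qed.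

Lemma sq3_ge0 v : 0 <= sq3 v.
Proof. rewrite sq3E; set a := v _ _; set b := v _ _; set d := v _ _; nra. Qed.

Lemma en_ge0 v : 0 <= en v.
Proof. exact: sqrtr_ge0. Qed.

Lemma en_sq v : en v ^+ 2 = sq3 v.
Proof. by rewrite sqr_sqrtr // sq3_ge0. Qed.

Lemma en_lt v r : 0 < r -> (en v < r) = (sq3 v < r ^+ 2).
Proof.
move=> hr; rewrite -{1}(ger0_norm (ltW hr)) -sqrtr_sqr ltr_sqrt //.
by rewrite exprn_gt0.
Qed.

Lemma le_en v r : 0 <= r -> sq3 v <= r ^+ 2 -> en v <= r.
Proof.
move=> hr h; rewrite -(ger0_norm hr) -sqrtr_sqr ler_sqrt //.
by rewrite exprn_ge0.
Qed.

Lemma en_tri u v : en (u + v) <= en u + en v.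
Proof.
apply: le_en; first by rewrite addr_ge0 // en_ge0.
have hu := en_sq u; have hv := en_sq v.
have gu := en_ge0 u; have gv := en_ge0 v.
move: hu hv; rewrite !sq3E !mxE.
set a0 := u _ _; set a1 := u _ _; set a2 := u _ _.
set b0 := v _ _; set b1 := v _ _; set b2 := v _ _.
set s := en u; set t := en v => hu hv.
have L : (a0*b0 + a1*b1 + a2*b2)^+2 <= s^+2 * t^+2.
  rewrite hu hv -subr_ge0.
  have -> : (a0 ^+ 2 + a1 ^+ 2 + a2 ^+ 2) * (b0 ^+ 2 + b1 ^+ 2 + b2 ^+ 2) -
    (a0*b0 + a1*b1 + a2*b2)^+2 = (a0*b1-a1*b0)^+2 + (a0*b2-a2*b0)^+2 + (a1*b2-a2*b1)^+2 by ring.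
  by rewrite !addr_ge0 // sqr_ge0.
have : a0*b0 + a1*b1 + a2*b2 <= s * t.
  have st0 : 0 <= s * t by rewrite mulr_ge0.
  rewrite -exprMn in L.
  apply: (le_trans (ler_norm _)); rewrite -sqrtr_sqr -(ger0_norm st0) -sqrtr_sqr.
  by rewrite ler_sqrt // sqr_ge0.
nra.
Qed.

Lemma en_scale a v : en (a *: v) = `|a| * en v.
Proof.
rewrite /en -sqrtr_sqr -sqrtrM ?sqr_ge0 //; congr (Num.sqrt _).
rewrite !sq3E !mxE; ring.
Qed.

Lemma en_small v e : (forall i, `|v ord0 i| < e) -> en v < 3 * e.
Proof.
move=> h; have e0 : 0 < e by apply: le_lt_trans (h ord0).
rewrite en_lt ?mulr_gt0 // sq3E.
have := h ord0; have := h (lift ord0 ord0); have := h (lift ord0 (lift ord0 ord0)).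
rewrite !ltr_norml.
set a := v _ _; set b := v _ _; set d := v _ _; nra.
Qed.


Lemma en_convex c x x' a b : 0 <= a -> 0 <= b -> 0 < a + b ->
  en ((a+b)^-1 *: (a *: x + b *: x') - c) * (a + b) <= a * en (x - c) + b * en (x' - c).
Proof.
move=> a0 b0 ab0.
have -> : (a+b)^-1 *: (a*:x + b*:x') - c = (a+b)^-1 *: (a *: (x - c) + b *: (x' - c)).
  apply/rowP => i; rewrite !mxE; field; exact: lt0r_neq0.
rewrite en_scale ger0_norm; last by rewrite invr_ge0 ltW.
rewrite mulrAC mulVf ?mul1r; last exact: lt0r_neq0.
by apply: le_trans (en_tri _ _) _; rewrite !en_scale !ger0_norm.
Qed.

Lemma ballP c (r : R) x : 0 < r -> eucl_ball c r x <-> en (x - c) < r.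
Proof.
move=> hr; rewrite en_lt // /sq3 /eucl_ball /=.
suff -> : \sum_(i<3) (x - c) ord0 i ^+2 = \sum_(i<3) (x ord0 i - c ord0 i)^+2 :> R by [].
by apply: eq_bigr => i _; rewrite !mxE.
Qed.

Lemma compose (P P' x x' Y' : 'rV[R]_3) (al be : R) :
  Y' - P' = be *: (P' - x') -> P' - P = al *: (P - x) -> 0 < al -> 0 <= be ->
  Y' - P = (al*(1+be) + be) *: (P - ((al*(1+be) + be)^-1 *: ((al*(1+be)) *: x + be *: x'))).
Proof.
move/(canRL (subrK _)) => ->; move/(canRL (subrK _)) => -> al0 be0.
have g0 : al*(1+be) + be != 0 by apply: lt0r_neq0; nra.
apply/rowP=> i; rewrite !mxE; field; exact: g0.
Qed.

End En.

Arguments ballP {R c r x}.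
Arguments compose {R P P' x x' Y' al be}.

Theorem proposition2 (R : realType) (c : 'rV[R]_3) (r : R) (P : 'rV[R]_3) :
  0 < r -> ~ eucl_ball c r P ->
  (forall P' : 'rV[R]_3, half_cone (eucl_ball c r) P P' ->
     closure (half_cone (eucl_ball c r) P') `<=` half_cone (eucl_ball c r) P)
  /\ (forall (P' eta : 'rV[R]_3), half_cone (eucl_ball c r) P P' ->
     half_cone (eucl_ball c r) P' (P' + eta) ->
     half_cone (eucl_ball c r) P (P + eta))
  /\ (forall P' : 'rV[R]_3, half_cone0 (eucl_ball c r) P P' ->
     half_cone (eucl_ball c r) P' `<=` half_cone (eucl_ball c r) P).
Proof.
move=> r0 _; split; [|split].
- move=> P' [x [/(ballP r0) xB [al [al0 hP']]]] Y hY.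
  set e := en (x - c).
  have e0 : 0 <= e by apply: en_ge0.
  pose eps := al * (r - e) / 6.
  have eps0 : 0 < eps by rewrite /eps divr_gt0 // mulr_gt0 // subr_gt0.
  have [Y' [[x' [/(ballP r0) x'B [be [be0 hY']]]] hb]] := hY _ (nbhsx_ballx Y eps eps0).
  have D : en (Y - Y') < 3 * eps.
    apply: en_small => i; rewrite !mxE; case: hb => _ /(_ ord0 i); done.
  have hc := compose hY' hP' al0 (ltW be0).
  set g := al * (1 + be) + be in hc.
  have g0 : 0 < g by rewrite /g; nra.
  set z' := g^-1 *: _ in hc.
  exists (z' - g^-1 *: (Y - Y')); split; last first.
    exists g; split => //.
    have -> : P - (z' - g^-1 *: (Y - Y')) = (P - z') + g^-1 *: (Y - Y').
      by apply/rowP => i; rewrite !mxE; ring.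
    rewrite scalerDr -hc scalerA mulfV ?scale1r; last exact: lt0r_neq0.
    by apply/rowP => i; rewrite !mxE; ring.
  apply/(ballP r0).
  have -> : z' - g^-1 *: (Y - Y') - c = (z' - c) + (- g^-1) *: (Y - Y').
    by apply/rowP => i; rewrite !mxE; ring.
  have T := en_tri (z' - c) ((- g^-1) *: (Y - Y')).
  rewrite en_scale normrN ger0_norm in T; last by rewrite invr_ge0 ltW.
  have C := @en_convex R c x x' (al * (1 + be)) be.
  rewrite -/g -/z' in C.
  have C' := C (ltW (mulr_gt0 al0 (addr_gt0 ltr01 be0))) (ltW be0) g0.
  have e'0 := en_ge0 (x' - c).
  set E := en (_ + _) in T *.
  set E1 := en (z' - c) in T C'.
  set D' := en (Y - Y') in T D.
  have gi : g^-1 * g = 1 by rewrite mulVf //; exact: lt0r_neq0.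
  have T' : E * g <= E1 * g + D'.
    have := ler_wpM2r (ltW g0) T.
    by rewrite mulrDl mulrAC gi mul1r.
  rewrite -/e in C'.
  have h1 : be * en (x' - c) <= be * r by rewrite ler_wpM2l ?ltW.
  have h2 : al * (r - e) / 2 <= al * (1 + be) * (r - e).
    have H : 0 < r - e by rewrite subr_gt0.
    have k := mulr_gt0 al0 H; have k2 := mulr_gt0 k be0.
    have -> : al * (1 + be) * (r - e) = al * (r - e) + al * (r - e) * be by ring.
    lra.
  rewrite -(ltr_pM2r g0).
  have : E * g < al * (1 + be) * e + be * r + al * (r - e) / 2.
    rewrite /eps in D; lra.
  rewrite /g; lra.
- move=> P' eta [x [/(ballP r0) xB [al [al0 hP']]]] [x' [/(ballP r0) x'B [be [be0 hY]]]].
  have he : eta = be *: (P' - x') by rewrite -hY addrC addKr.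
  have g0 : 0 < al + 1 by rewrite addr_gt0.
  exists ((al+1)^-1 *: (al *: x + 1 *: x')); split.
    apply/(ballP r0).
    have C := en_convex c x x' al 1 (ltW al0) ler01 g0.
    rewrite -(ltr_pM2r g0).
    have h1 : al * en (x - c) <= al * r by rewrite ler_wpM2l ?ltW.
    lra.
  exists (be * (al + 1)); split; first by rewrite mulr_gt0.
  rewrite addrC addKr he.
  move/(canRL (subrK _)): hP' => ->.
  apply/rowP => i; rewrite !mxE; field; exact: lt0r_neq0.
- move=> P' [hP'|->] //.
  move: hP' => [x [/(ballP r0) xB [al [al0 hP']]]] Y [x' [/(ballP r0) x'B [be [be0 hY]]]].
  have hc := compose hY hP' al0 (ltW be0).
  set g := al * (1 + be) + be in hc.
  have g0 : 0 < g by rewrite /g; nra.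
  set z' := g^-1 *: _ in hc.
  exists z'; split; last by exists g.
  apply/(ballP r0).
  have C := @en_convex R c x x' (al * (1 + be)) be.
  rewrite -/g -/z' in C.
  have C' := C (ltW (mulr_gt0 al0 (addr_gt0 ltr01 be0))) (ltW be0) g0.
  rewrite -(ltr_pM2r g0).
  have a0 := mulr_gt0 al0 (addr_gt0 ltr01 be0).
  have h1 : be * en (x' - c) <= be * r by rewrite ler_wpM2l ?ltW.
  have h2 : al * (1 + be) * en (x - c) < al * (1 + be) * r by rewrite ltr_pM2l.
  have -> : r * g = al * (1 + be) * r + be * r by rewrite /g; ring.
  lra.
Qed.
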